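(* Let $C\subseteq\mathbb{R}^n$ be a nonempty compact convex set with diameter $D$, and let $f:\mathbb{R}^n\to\mathbb{R}$ be an abs-smooth function that is convex on $C$, with curvature constant $\mathcal{C}_f$ on $C$. Let $x^*\in C$ be a minimizer of $f$ on $C$ and fix $\epsilon\ge0$. Consider the heavy ball ASFW iteration: $x_0\in C$, and for $t=0,1,2,\dots$ set $a_t=2t+2$, $A_t=\sum_{i=0}^t a_i=(t+1)(t+2)$, $\alpha_t=a_t/A_t=2/(t+2)$, define $$\Phi_t(v):=\sum_{i=0}^t a_i\frac{\Delta f(x_i;\alpha_i(v-x_i))}{\alpha_i},\qquad \eta_t:=\epsilon a_t\alpha_t\mathcal{C}_f=\epsilon\frac{a_t^2}{A_t}\mathcal{C}_f,$$ choose $v_t\in C$ with $\Phi_t(v_t)\le\min_{v\in C}\Phi_t(v)+\eta_t$, and set $x_{t+1}=(1-\alpha_t)x_t+\alpha_t v_t$. Define $$L_t=\frac{1}{A_t}\Big(\sum_{i=0}^t a_if(x_i)+\sum_{i=0}^t a_i\Big[\frac{\Delta f(x_i;\alpha_i(v_t-x_i))}{\alpha_i}-\frac{\alpha_i}{2}\mathcal{C}_f\Big]-\eta_t\Big)$$ and $G_t=f(x_{t+1})-L_t$. Then for every $t\ge0$, $$f(x_{t+1})-f(x^* )\le G_t\le\frac{4\,\mathcal{C}_f}{t+2}(1+\epsilon).$$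
   Context: A function $f:\mathbb{R}^n\to\mathbb{R}$ is abs-smooth if it is locally Lipschitz and admits an abs-smooth form: for some $s\in\mathbb{N}\cup\{0\}$ there are $F=(F_1,\dots,F_s)\in\mathcal{C}^d(\mathbb{R}^{n+s+s},\mathbb{R}^s)$ and $\varphi\in\mathcal{C}^d(\mathbb{R}^{n+s},\mathbb{R})$ with $d\ge1$ such that $y=f(x)$ is computed by $z_i=F_i(x,z_1,\dots,z_{i-1},|z_1|,\dots,|z_{i-1}|)$ for $i=1,\dots,s$ and $y=\varphi(x,z)$. For a point $\mathring{x}$, write $\mathring z=z(\mathring x)$ and let $Z=\partial_x F$, $M=\partial_z F$, $L=\partial_{|z|}F$ (evaluated at $(\mathring x,\mathring z,|\mathring z|)$; $M,L$ strictly lower triangular), $a=\partial_x\varphi$, $b=\partial_z\varphi$ (evaluated at $(\mathring x,\mathring z)$). The piecewise linearization of $f$ at $\mathring x$ is $f_{PL,\mathring x}(x)=d_0+a^Tx+b^Tz$ where $z$ solves $z=c+Zx+Mz+L|z|$, with constants $c,d_0$ chosen so that $f_{PL,\mathring x}(\mathring x)=f(\mathring x)$ (namely $c=\mathring z-Z\mathring x-M\mathring z-L|\mathring z|$, $d_0=f(\mathring x)-a^T\mathring x-b^T\mathring z$). The abs-linearization is $\Delta f(\mathring x;x-\mathring x):=f_{PL,\mathring x}(x)-f(\mathring x)$. The curvature constant of $f$ on $C$ is $$\mathcal{C}_f:=\sup_{x,v\in C,\ \alpha\in(0,1],\ y=x+\alpha(v-x)}\frac{2}{\alpha^2}\big|f(y)-f(x)-\Delta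 f(x;y-x)\big|,$$ which is finite for compact $C$. *)

(* Defs.v *)
From HB Require Import structures.
From mathcomp Require Import all_boot all_order all_algebra.
From mathcomp Require Import all_classical all_reals all_analysis.
Set Implicit Arguments. Unset Strict Implicit. Unset Printing Implicit Defensive.
Import Order.TTheory GRing.Theory Num.Theory.
Import numFieldNormedType.Exports.
Local Open Scope classical_set_scope.
Local Open Scope ring_scope.

Section AbsSmooth.
Variable R : realType.

Definition absv (s : nat) (z : 'cV[R]_s) : 'cV[R]_s := map_mx (fun r => `|r|) z.

Definition C1 (U V : normedModType R) (g : U -> V) : Prop :=
  (forall p, differentiable g p) /\ (forall v : U, continuous (fun p => derive g p v)).

Definition strictly_triangular (n s : nat)
  (F : 'cV[R]_n * 'cV[R]_s * 'cV[R]_s -> 'cV[R]_s) : Prop :=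
  forall (i : 'I_s) (x : 'cV[R]_n) (z z' w w' : 'cV[R]_s),
    (forall j : 'I_s, (j < i)%N -> z j 0 = z' j 0 /\ w j 0 = w' j 0) ->
    F (x, z, w) i 0 = F (x, z', w') i 0.

(* the switching variables z(x): z_i = F_i(x, z_1.., |z_1|..) computed
   successively (s sweeps suffice by strict triangularity) *)
Definition zeval (n s : nat) (F : 'cV[R]_n * 'cV[R]_s * 'cV[R]_s -> 'cV[R]_s)
  (x : 'cV[R]_n) : 'cV[R]_s :=
  iter s (fun z => F (x, z, absv z)) 0.

(* (s, F, phi) is an abs-smooth form of f (with d = 1, i.e. F, phi C^1) *)
Definition abs_smooth_form (n s : nat) (f : 'cV[R]_n -> R)
  (F : 'cV[R]_n * 'cV[R]_s * 'cV[R]_s -> 'cV[R]_s)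
  (phi : 'cV[R]_n * 'cV[R]_s -> R) : Prop :=
  C1 F /\ C1 phi /\ strictly_triangular F /\ forall x, f x = phi (x, zeval F x).

Definition locally_lipschitz (n : nat) (f : 'cV[R]_n -> R) : Prop :=
  forall x : 'cV[R]_n, exists r : R, 0 < r /\ exists K : R,
    forall y z : 'cV[R]_n, `|x - y| < r -> `|x - z| < r -> `|f y - f z| <= K * `|y - z|.

Definition e_ (m : nat) (j : 'I_m) : 'cV[R]_m := delta_mx j 0.

Section Lin.
Variables (n s : nat) (f : 'cV[R]_n -> R)
  (F : 'cV[R]_n * 'cV[R]_s * 'cV[R]_s -> 'cV[R]_s)
  (phi : 'cV[R]_n * 'cV[R]_s -> R).

Definition pt (x0 : 'cV[R]_n) := (x0, zeval F x0, absv (zeval F x0)).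
Definition Zmx (x0 : 'cV[R]_n) : 'M[R]_(s, n) :=
  \matrix_(i, j) derive F (pt x0) (e_ j, 0, 0) i 0.
Definition Mmx (x0 : 'cV[R]_n) : 'M[R]_(s, s) :=
  \matrix_(i, j) derive F (pt x0) (0, e_ j, 0) i 0.
Definition Lmx (x0 : 'cV[R]_n) : 'M[R]_(s, s) :=
  \matrix_(i, j) derive F (pt x0) (0, 0, e_ j) i 0.
Definition avec (x0 : 'cV[R]_n) : 'cV[R]_n :=
  \col_j derive phi (x0, zeval F x0) (e_ j, 0).
Definition bvec (x0 : 'cV[R]_n) : 'cV[R]_s :=
  \col_j derive phi (x0, zeval F x0) (0, e_ j).

Definition cvec (x0 : 'cV[R]_n) : 'cV[R]_s :=
  zeval F x0 - Zmx x0 *m x0 - Mmx x0 *m zeval F x0 - Lmx x0 *m absv (zeval F x0).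
Definition d0 (x0 : 'cV[R]_n) : R :=
  f x0 - ((avec x0)^T *m x0) 0 0 - ((bvec x0)^T *m zeval F x0) 0 0.

(* solution z of z = c + Z x + M z + L |z| (M, L strictly lower triangular) *)
Definition zPL (x0 x : 'cV[R]_n) : 'cV[R]_s :=
  iter s (fun z => cvec x0 + Zmx x0 *m x + Mmx x0 *m z + Lmx x0 *m absv z) 0.

Definition fPL (x0 x : 'cV[R]_n) : R :=
  d0 x0 + ((avec x0)^T *m x) 0 0 + ((bvec x0)^T *m zPL x0 x) 0 0.

Definition absLin (x0 h : 'cV[R]_n) : R := fPL x0 (x0 + h) - f x0.

Definition curv_set (C : set 'cV[R]_n) : set R :=
  [set r | exists x v : 'cV[R]_n, exists al : R,
     x \in C /\ v \in C /\ 0 < al <= 1 /\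
     r = 2 / al ^+ 2 * `| f (x + al *: (v - x)) - f x - absLin x (al *: (v - x)) | ].

Definition curvature_constant (C : set 'cV[R]_n) : R := sup (curv_set C).
End Lin.

Definition convex_set_on (n : nat) (C : set 'cV[R]_n) : Prop :=
  forall x y, x \in C -> y \in C -> forall t : R, 0 <= t <= 1 ->
    (1 - t) *: x + t *: y \in C.

Definition convex_fun_on (n : nat) (C : set 'cV[R]_n) (f : 'cV[R]_n -> R) : Prop :=
  forall x y, x \in C -> y \in C -> forall t : R, 0 <= t <= 1 ->
    f ((1 - t) *: x + t *: y) <= (1 - t) * f x + t * f y.

Definition hb_a (t : nat) : R := (2 * t + 2)%:R.
Definition hb_A (t : nat) : R := \sum_(i < t.+1) hb_a i.
Definition hb_alpha (t : nat) : R := hb_a t / hb_A t.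

End AbsSmooth.

(* Main.v *)
Require Import Defs.
From HB Require Import structures.
From mathcomp Require Import all_boot all_order all_algebra.
From mathcomp Require Import all_classical all_reals all_analysis.
From mathcomp Require Import ring lra.
Import Order.TTheory GRing.Theory Num.Theory.
Import numFieldNormedType.Exports.
Local Open Scope classical_set_scope.
Local Open Scope ring_scope.
Lemma hb_aE (R : realType) i : hb_a R i = 2 * i%:R + 2.
Proof. by rewrite /hb_a natrD natrM. Qed.
Lemma hb_AE (R : realType) t : hb_A R t = (t%:R + 1) * (t%:R + 2).
Proof.
elim: t => [|t IH]; first by rewrite /hb_A big_ord1 hb_aE mulr0n; ring.
rewrite /hb_A big_ord_recr /= -/(hb_A R t) IH hb_aE -natr1; ring.
Qed.
Lemma hb_alphaE (R : realType) t : hb_alpha R t = 2 / (t%:R + 2).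
Proof.
rewrite /hb_alpha hb_AE hb_aE; have h : (0:R) <= t%:R by [].
field; lra.
Qed.
Lemma hb_al_pos (R : realType) t : 0 < hb_alpha R t <= 1.
Proof.
rewrite hb_alphaE; have h : (0:R) <= t%:R by [].
apply/andP; split; first by apply: divr_gt0; lra.
by rewrite ler_pdivrMr; lra.
Qed.
Lemma hb_a_al (R : realType) t : hb_a R t / hb_alpha R t = hb_A R t.
Proof.
rewrite hb_alphaE hb_AE hb_aE; have h : (0:R) <= t%:R by [].
field; lra.
Qed.
Lemma hb_a_al4 (R : realType) t : hb_a R t * hb_alpha R t <= 4.
Proof.
rewrite hb_alphaE hb_aE; have h : (0:R) <= t%:R by [].
rewrite mulrA ler_pdivrMr; lra.
Qed.
Lemma hb_A_rec (R : realType) t : hb_A R t.+1 = hb_A R t + hb_a R t.+1.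
Proof. by rewrite /hb_A big_ord_recr. Qed.
Lemma hb_A0 (R : realType) : hb_A R 0 = hb_a R 0.
Proof. by rewrite /hb_A big_ord1. Qed.

Lemma vec_id (R : realType) n (x w : 'cV[R]_n) a : (1 - a) *: x + a *: w = x + a *: (w - x).
Proof. rewrite scalerBr scalerBl scale1r addrAC addrA //. Qed.

Lemma curv_le (R : realType) n s C f F phi (x w : 'cV[R]_n) al :
  has_ubound (curv_set f F phi C) -> x \in C -> w \in C -> 0 < al <= 1 ->
  `|f (x + al *: (w - x)) - f x - absLin (s:=s) f F phi x (al *: (w - x))|
    <= al ^+ 2 / 2 * curvature_constant f F phi C.
Proof.
move=> ub xC wC hal.
have h : 2 / al ^+ 2 * `|f (x + al *: (w - x)) - f x - absLin (s:=s) f F phi x (al *: (w - x))|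
   <= curvature_constant f F phi C.
  by apply: ub_le_sup => //; exists x, w, al.
have hp : 0 < al ^+ 2 by rewrite exprn_gt0 //; case/andP: hal.
set e := `|_| in h *.
have -> : e = al ^+ 2 / 2 * (2 / al ^+ 2 * e) by field; case/andP: hal => h0 _; rewrite gt_eqF.
by apply: ler_wpM2l => //; apply: divr_ge0; [apply: ltW|].
Qed.

Lemma hb_a_al_mul (R : realType) t (y : R) : hb_a R t * (y / hb_alpha R t) = hb_A R t * y.
Proof.
rewrite -hb_a_al; have := hb_al_pos R t; case/andP => h _.
field; rewrite gt_eqF //.
Qed.
Lemma hb_A_al (R : realType) t : hb_A R t * hb_alpha R t = hb_a R t.
Proof.
rewrite -hb_a_al; have := hb_al_pos R t; case/andP => h _.
field; rewrite gt_eqF //.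
Qed.
Lemma hb_A_pos (R : realType) t : 0 < hb_A R t.
Proof. rewrite hb_AE; have h : (0:R) <= t%:R by []; nra. Qed.
Lemma hb_a_ge0 (R : realType) t : 0 <= hb_a R t.
Proof. rewrite hb_aE; have h : (0:R) <= t%:R by []; lra. Qed.
Theorem mainTheorem6 (R : realType) (n s : nat) (C : set 'cV[R]_n)
  (f : 'cV[R]_n -> R)
  (F : 'cV[R]_n * 'cV[R]_s * 'cV[R]_s -> 'cV[R]_s)
  (phi : 'cV[R]_n * 'cV[R]_s -> R)
  (xstar : 'cV[R]_n) (eps : R) (x v : nat -> 'cV[R]_n) :
  C !=set0 -> compact C -> convex_set_on C ->
  locally_lipschitz f -> abs_smooth_form f F phi ->
  convex_fun_on C f ->
  has_ubound (curv_set f F phi C) ->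
  xstar \in C -> (forall y, y \in C -> f xstar <= f y) ->
  0 <= eps ->
  let Cf := curvature_constant f F phi C in
  let Df := absLin f F phi in
  let a := @hb_a R in
  let A := @hb_A R in
  let al := @hb_alpha R in
  let eta t := eps * a t * al t * Cf in
  let Phi t w := \sum_(i < t.+1) a i * (Df (x i) (al i *: (w - x i)) / al i) in
  x 0 \in C ->
  (forall t, v t \in C) ->
  (forall t w, w \in C -> Phi t (v t) <= Phi t w + eta t) ->
  (forall t, x t.+1 = (1 - al t) *: x t + al t *: v t) ->
  let L t := (A t)^-1 *
       (\sum_(i < t.+1) a i * f (x i)
        + \sum_(i < t.+1) a i * (Df (x i) (al i *: (v t - x i)) / al i - al i / 2 * Cf)
        - eta t) in
  let G t := f (x t.+1) - L t in
  forall t : nat,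
    f (x t.+1) - f xstar <= G t /\ G t <= 4 * Cf / (t%:R + 2) * (1 + eps).
Proof.
move=> C0 _ convC _ _ convf ub xsC xsopt eps0 Cf Df a A al eta Phi x0C vC vopt xrec L G t.
rewrite /G /L /eta /Phi /al /A /a /Df in vopt xrec *.
have xC : forall i, x i \in C.
  elim=> [|i IH] //; rewrite xrec; apply: convC => //.
  by have := hb_al_pos R i; case/andP => h1 h2; rewrite ltW.
have Cf0 : 0 <= Cf.
  case: C0 => y yC; have yC' : y \in C by rewrite inE.
  have h01 : 0 < (1:R) <= 1 by rewrite ltr01 lexx.
  have := @curv_le R n s C f F phi y y 1 ub yC' yC' h01.
  rewrite expr1n => h; have := normr_ge0 (f (y + 1 *: (y - y)) - f y -
     absLin f F phi y (1 *: (y - y))); rewrite -/Cf in h; lra.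
have K : forall i, f (x i.+1) - f (x i) - absLin f F phi (x i) (hb_alpha R i *: (v i - x i))
     <= hb_alpha R i ^+ 2 / 2 * Cf.
  move=> i; rewrite xrec vec_id; apply: le_trans (ler_norm _) _.
  exact: curv_le (xC i) (vC i) (hb_al_pos R i).
have K' : forall i w, w \in C -> absLin f F phi (x i) (hb_alpha R i *: (w - x i))
     <= hb_alpha R i * (f w - f (x i)) + hb_alpha R i ^+ 2 / 2 * Cf.
  move=> i w wC.
  have h := @curv_le R n s C f F phi (x i) w _ ub (xC i) wC (hb_al_pos R i).
  move: h; rewrite -/Cf ler_norml => /andP [h _].
  have := hb_al_pos R i; case/andP => a0 a1.
  have := convf _ _ (xC i) wC (hb_alpha R i); rewrite ltW ?a1 // vec_id => /(_ isT) hc.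
  set D := absLin _ _ _ _ _ in h *; set fy := f (_ + _) in h hc.
  rewrite -/Cf in h; nra.
have hA := hb_A_pos R t.
have e1 : \sum_(i < t.+1) hb_a R i * (absLin f F phi (x i) (hb_alpha R i *: (v t - x i)) / hb_alpha R i - hb_alpha R i / 2 * Cf) = \sum_(i < t.+1) hb_a R i * (absLin f F phi (x i) (hb_alpha R i *: (v t - x i)) / hb_alpha R i) - \sum_(i < t.+1) hb_a R i * (hb_alpha R i / 2 * Cf).
  by rewrite -sumrB; apply: eq_bigr => i _; rewrite mulrBr.
rewrite e1.
set P := \sum_(i < t.+1) hb_a R i * f (x i).
split.
  have hv := vopt t xstar xsC.
  have e2 : \sum_(i < t.+1) hb_a R i * (absLin f F phi (x i) (hb_alpha R i *: (xstar - x i)) / hb_alpha R i) <= \sum_(i < t.+1) hb_a R i * (f xstar - f (x i) + hb_alpha R i / 2 * Cf).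
    apply: ler_sum => i _; apply: ler_wpM2l; first exact: hb_a_ge0.
    have := hb_al_pos R i; case/andP => a0 _.
    rewrite ler_pdivrMr //.
    suff -> : (f xstar - f (x i) + hb_alpha R i / 2 * Cf) * hb_alpha R i = hb_alpha R i * (f xstar - f (x i)) + hb_alpha R i ^+ 2 / 2 * Cf by apply: K'.
    by ring.
  have e3 : \sum_(i < t.+1) hb_a R i * (f xstar - f (x i) + hb_alpha R i / 2 * Cf) = hb_A R t * f xstar - P + \sum_(i < t.+1) hb_a R i * (hb_alpha R i / 2 * Cf).
    rewrite /P /hb_A mulr_suml -sumrB -big_split /=; apply: eq_bigr => i _; ring.
  set X := (X in _ <= _ - _ * X).
  have hle : X <= hb_A R t * f xstar by rewrite /X; lra.
  have : (hb_A R t)^-1 * X <= f xstar.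
    by rewrite -(ler_pM2l hA) mulrA mulfV ?gt_eqF // mul1r.
  lra.
have hKA : forall k, hb_A R k * f (x k.+1) - hb_A R k * f (x k) - hb_A R k * absLin f F phi (x k) (hb_alpha R k *: (v k - x k)) <= hb_a R k * (hb_alpha R k / 2 * Cf).
  move=> k; have h := ler_wpM2l (ltW (hb_A_pos R k)) (K k).
  rewrite -hb_A_al; move: h; rewrite !mulrBr.
  suff -> : hb_A R k * (hb_alpha R k ^+ 2 / 2 * Cf) = hb_A R k * hb_alpha R k * (hb_alpha R k / 2 * Cf) by [].
  by ring.
pose S k := \sum_(i < k.+1) hb_a R i * f (x i) + \sum_(i < k.+1) hb_a R i * (absLin f F phi (x i) (hb_alpha R i *: (v k - x i)) / hb_alpha R i).
pose T k := \sum_(i < k.+1) hb_a R i * (hb_alpha R i / 2 * Cf).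
pose E k := \sum_(0 <= i < k) eps * hb_a R i * hb_alpha R i * Cf.
have HP : forall k, hb_A R k * f (x k.+1) - S k <= T k + E k.
  elim=> [|k IH].
    rewrite /S /T /E !big_ord1 big_geq // addr0 hb_a_al_mul.
    have := hKA 0; rewrite hb_A0 => h; simpl; lra.
  rewrite /S /T /E in IH *.
  rewrite !(big_ord_recr k.+1) big_nat_recr //=.
  have hv := vopt k (v k.+1) (vC _).
  have h1 := hKA k.+1.
  have h2 : hb_A R k.+1 * f (x k.+1) = hb_A R k * f (x k.+1) + hb_a R k.+1 * f (x k.+1) by rewrite hb_A_rec mulrDl.
  rewrite hb_a_al_mul.
  lra.
have hB : 2 * T t + (E t + eps * hb_a R t * hb_alpha R t * Cf) <= (t%:R + 1) * ((1 + eps) * 4 * Cf).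
  have -> : 2 * T t + (E t + eps * hb_a R t * hb_alpha R t * Cf) = \sum_(i < t.+1) (1 + eps) * (hb_a R i * hb_alpha R i) * Cf.
    rewrite /E -big_nat_recr //= big_mkord /T mulr_sumr -big_split; by apply: eq_bigr => i _; simpl; field.
  apply: (@le_trans _ _ (\sum_(i < t.+1) (1 + eps) * 4 * Cf)).
    apply: ler_sum => i _; apply: ler_wpM2r => //; apply: ler_wpM2l; [lra | exact: hb_a_al4].
  by rewrite sumr_const card_ord -[X in X <= _]mulr_natl -natr1.
have hPt := HP t.
rewrite /S /T /E in hPt hB.
set X := (X in _ - _ * X <= _).
have -> : f (x t.+1) - (hb_A R t)^-1 * X = (hb_A R t * f (x t.+1) - X) * (hb_A R t)^-1.
  by field; rewrite gt_eqF.
have -> : 4 * Cf / (t%:R + 2) * (1 + eps) = ((t%:R + 1) * ((1 + eps) * 4 * Cf)) * (hb_A R t)^-1.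
  rewrite hb_AE; have h : 0 <= (t%:R : R) by []. field; lra.
rewrite ler_pM2r ?invr_gt0 // /X /P.
move: hPt hB; set Q := (t%:R + 1) * _; set Af := hb_A R t * _; move=> hPt hB.
lra.
Qed.
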